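(* The following statements are equivalent: (i) $S$ is nearly epsilon-strongly graded; (ii) for every $g\in G$ the ring $S_{(g,g^{-1})}=S_gS_{g^{-1}}$ is s-unital, and for every graded left $S$-module $M$ and all $g,h\in G$ one has $S_gM_h=S_{(g,g^{-1})}M_{gh}$; (iii) for every $g\in G$ the ring $S_{(g,g^{-1})}$ is s-unital, and for every graded left $S$-module $M$ and all $g,h\in G$ the multiplication map $m_{g,h}:S_g\otimes_R M_h\to S_{(g,g^{-1})}M_{gh}$, $s\otimes m\mapsto sm$, is a well-defined isomorphism of left $R$-modules; (iv) for every $g\in G$ the ring $S_{(g,g^{-1})}$ is s-unital, and the family of multiplication maps $\tau_M:S\otimes_R M_e\to \bigoplus_{g\in G}S_{(g,g^{-1})}M_g$, $s\otimes m\mapsto sm$, indexed by the graded left $S$-modules $M$, is a well-defined natural isomorphism between the functors $S\otimes_R(-)_e$ and $S(\mathrm{id})$ from $S$-gr to $S$-gr.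
   Context: $G$ is a group with identity $e$; $S=\bigoplus_{g\in G}S_g$ is an associative unital ring graded by $G$ ($S_gS_h\subseteq S_{gh}$), $R=S_e$, and $XY$ denotes the set of finite sums of products $xy$, $x\in X$, $y\in Y$. $S$-gr is the category of graded left $S$-modules $M=\bigoplus_g M_g$ ($S_gM_h\subseteq M_{gh}$) with degree-preserving $S$-linear maps. For a ring $A$, a left $A$-module $M$ is s-unital if for every $m\in M$ there is $a\in A$ with $am=m$; right s-unital analogously; an $(A,B)$-bimodule is s-unital if it is left s-unital over $A$ and right s-unital over $B$; a ring is s-unital if it is s-unital as a left and as a right module over itself. $S$ is nearly epsilon-strongly graded if for each $g\in G$, $S_g$ is an s-unital $(S_gS_{g^{-1}},S_{g^{-1}}S_g)$-bimodule. For $M$ in $S$-gr, $M_e$ is a left $R$-module and $S\otimes_R M_e$ is graded by $(S\otimes_R M_e)_g=S_g\otimes_R M_e$; the functor $(-)_e$ sends $M$ to $M_e$. $S(\mathrm{id})$ is the functor $S$-gr$\to S$-gr sending $M$ to its graded submodule $S(M)=\bigoplus_{g\in G}S_gS_{g^{-1}}M_g$ (and morphisms to their restrictions). *)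

(* Defs.v *)
From HB Require Import structures.
From mathcomp Require Import all_boot all_algebra.
From Stdlib Require List.
Set Implicit Arguments. Unset Strict Implicit. Unset Printing Implicit Defensive.
Import GRing.Theory.
Local Open Scope ring_scope.

Record group := Group {
  gcarrier :> Type;
  gmul : gcarrier -> gcarrier -> gcarrier;
  ginv : gcarrier -> gcarrier;
  gunit : gcarrier;
  gmulA : forall x y z, gmul x (gmul y z) = gmul (gmul x y) z;
  gmul1 : forall x, gmul x gunit = x;
  g1mul : forall x, gmul gunit x = x;
  gmulV : forall x, gmul x (ginv x) = gunit;
  gVmul : forall x, gmul (ginv x) x = gunit }.

Definition prodset (A B : Type) (V : nmodType) (f : A -> B -> V)
    (X : A -> Prop) (Y : B -> Prop) : V -> Prop :=
  fun z => exists l : seq (A * B),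
    List.Forall (fun p => X p.1 /\ Y p.2) l /\ z = \sum_(p <- l) f p.1 p.2.

Definition add_subgroup (V : zmodType) (X : V -> Prop) : Prop :=
  X 0 /\ forall x y, X x -> X y -> X (x - y).

Definition internal_direct_sum (G : Type) (V : zmodType) (X : G -> V -> Prop)
  : Prop :=
  (forall g, add_subgroup (X g)) /\
  (forall v : V, exists l : seq (G * V),
      List.Forall (fun p => X p.1 p.2) l /\ v = \sum_(p <- l) p.2) /\
  (forall l : seq (G * V), List.NoDup (map fst l) ->
      List.Forall (fun p => X p.1 p.2) l -> \sum_(p <- l) p.2 = 0 ->
      List.Forall (fun p => p.2 = 0) l).

Definition graded_ring (G : group) (S : pzRingType) (Sg : G -> S -> Prop) : Prop :=
  internal_direct_sum Sg /\
  (forall g h x y, Sg g x -> Sg h y -> Sg (gmul g h) (x * y)).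

Definition graded_module (G : group) (S : pzRingType) (Sg : G -> S -> Prop)
    (M : lmodType S) (Mg : G -> M -> Prop) : Prop :=
  internal_direct_sum Mg /\
  (forall g h x m, Sg g x -> Mg h m -> Mg (gmul g h) (x *: m)).

Definition Sgg (G : group) (S : pzRingType) (Sg : G -> S -> Prop) (g : G)
  : S -> Prop := prodset *%R (Sg g) (Sg (ginv g)).

(* s-unital ring (given as a subset T of S closed under the ring operations) *)
Definition s_unital_ring (S : pzRingType) (T : S -> Prop) : Prop :=
  forall x, T x -> (exists a, T a /\ a * x = x) /\ (exists b, T b /\ x * b = x).

Definition nearly_eps_strongly (G : group) (S : pzRingType) (Sg : G -> S -> Prop)
  : Prop :=
  forall g s, Sg g s ->
    (exists a, prodset *%R (Sg g) (Sg (ginv g)) a /\ a * s = s) /\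
    (exists b, prodset *%R (Sg (ginv g)) (Sg g) b /\ s * b = s).

(* ---------- Tensor products X (x)_R Y, literally as a quotient of the
   free abelian group on X x Y by the bi-additivity / R-balancedness
   relations.  Formal Z-combinations are lists of (coefficient, pair). ---------- *)
Definition fcoef (S : pzRingType) (M : lmodType S)
    (c : seq (int * (S * M))) (p : S * M) : int :=
  \sum_(q <- c | q.2 == p) q.1.

Definition tensor_relation (S : pzRingType) (M : lmodType S)
    (X : S -> Prop) (Y : M -> Prop) (R : S -> Prop)
    (c : seq (int * (S * M))) : Prop :=
  (exists s s' m, X s /\ X s' /\ Y m /\
     c = [:: (1%:Z, (s + s', m)); ((-1)%:~R, (s, m)); ((-1)%:~R, (s', m))]) \/
  (exists s m m', X s /\ Y m /\ Y m' /\
     c = [:: (1%:Z, (s, m + m')); ((-1)%:~R, (s, m)); ((-1)%:~R, (s, m'))]) \/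
  (exists s r m, X s /\ R r /\ Y m /\
     c = [:: (1%:Z, (s * r, m)); ((-1)%:~R, (s, r *: m))]).

(* the element sum_i s_i (x) m_i of X (x)_R Y is zero *)
Definition tensor_zero (S : pzRingType) (M : lmodType S)
    (X : S -> Prop) (Y : M -> Prop) (R : S -> Prop) (l : seq (S * M)) : Prop :=
  exists rels : seq (int * seq (int * (S * M))),
    List.Forall (fun r => tensor_relation X Y R r.2) rels /\
    forall p, fcoef (map (fun q => (1%:Z, q)) l) p
              = \sum_(r <- rels) r.1 * fcoef r.2 p.

Definition cond_ii (G : group) (S : pzRingType) (Sg : G -> S -> Prop) : Prop :=
  (forall g, s_unital_ring (Sgg Sg g)) /\
  forall (M : lmodType S) (Mg : G -> M -> Prop), graded_module Sg Mg ->
    forall g h (z : M),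
      prodset *:%R (Sg g) (Mg h) z <-> prodset *:%R (Sgg Sg g) (Mg (gmul g h)) z.

(* m_{g,h} : S_g (x)_R M_h -> S_(g,g^-1) M_(gh), s (x) m |-> s m,
   is well defined (lands in the target) and bijective *)
Definition mult_map_iso (G : group) (S : pzRingType) (Sg : G -> S -> Prop)
    (M : lmodType S) (Mg : G -> M -> Prop) (g h : G) : Prop :=
  (forall s m, Sg g s -> Mg h m -> prodset *:%R (Sgg Sg g) (Mg (gmul g h)) (s *: m)) /\
  (forall z, prodset *:%R (Sgg Sg g) (Mg (gmul g h)) z ->
     exists l : seq (S * M), List.Forall (fun p => Sg g p.1 /\ Mg h p.2) l /\
                             z = \sum_(p <- l) p.1 *: p.2) /\
  (forall l : seq (S * M), List.Forall (fun p => Sg g p.1 /\ Mg h p.2) l ->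
     \sum_(p <- l) p.1 *: p.2 = 0 -> tensor_zero (Sg g) (Mg h) (Sg (gunit G)) l).

Definition cond_iii (G : group) (S : pzRingType) (Sg : G -> S -> Prop) : Prop :=
  (forall g, s_unital_ring (Sgg Sg g)) /\
  forall (M : lmodType S) (Mg : G -> M -> Prop), graded_module Sg Mg ->
    forall g h, mult_map_iso Sg Mg g h.

Definition SM (G : group) (S : pzRingType) (Sg : G -> S -> Prop)
    (M : lmodType S) (Mg : G -> M -> Prop) : M -> Prop :=
  fun z => exists l : seq (G * M),
    List.Forall (fun p => prodset *:%R (Sgg Sg p.1) (Mg p.1) p.2) l /\
    z = \sum_(p <- l) p.2.

(* tau_M : S (x)_R M_e -> S(M), s (x) m |-> s m : a well-defined isomorphism
   of graded S-modules (degree g part S_g (x) M_e goes to S_(g,g^-1) M_g) *)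
Definition tau_iso (G : group) (S : pzRingType) (Sg : G -> S -> Prop)
    (M : lmodType S) (Mg : G -> M -> Prop) : Prop :=
  (forall g s m, Sg g s -> Mg (gunit G) m -> prodset *:%R (Sgg Sg g) (Mg g) (s *: m)) /\
  (forall z, SM Sg Mg z ->
     exists l : seq (S * M), List.Forall (fun p => Mg (gunit G) p.2) l /\
                             z = \sum_(p <- l) p.1 *: p.2) /\
  (forall l : seq (S * M), List.Forall (fun p => Mg (gunit G) p.2) l ->
     \sum_(p <- l) p.1 *: p.2 = 0 ->
     tensor_zero (fun _ => True) (Mg (gunit G)) (Sg (gunit G)) l).

Definition cond_iv (G : group) (S : pzRingType) (Sg : G -> S -> Prop) : Prop :=
  (forall g, s_unital_ring (Sgg Sg g)) /\
  (forall (M : lmodType S) (Mg : G -> M -> Prop), graded_module Sg Mg ->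
     tau_iso Sg Mg) /\
  (* naturality: for a morphism f : M -> N in S-gr,
     tau_N o (S (x) f_e) = S(f) o tau_M *)
  (forall (M N : lmodType S) (Mg : G -> M -> Prop) (Ng : G -> N -> Prop),
     graded_module Sg Mg -> graded_module Sg Ng ->
     forall f : {linear M -> N}, (forall g m, Mg g m -> Ng g (f m)) ->
     forall l : seq (S * M), List.Forall (fun p => Mg (gunit G) p.2) l ->
       f (\sum_(p <- l) p.1 *: p.2) = \sum_(p <- l) p.1 *: f p.2).

(* Main.v *)
Require Import Defs.
From HB Require Import structures.
From mathcomp Require Import all_boot all_algebra.
From Stdlib Require Import ClassicalEpsilon.
From Stdlib Require List.
Set Implicit Arguments. Unset Strict Implicit. Unset Printing Implicit Defensive.
Import GRing.Theory.
Local Open Scope ring_scope.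


Lemma ginvK (G : group) (g : G) : ginv (ginv g) = g.
Proof.
rewrite -[ginv (ginv g)]gmul1 -(gVmul g) gmulA gVmul g1mul. done.
Qed.

Lemma gcancel (G : group) (h x : G) : gmul h x = h -> x = gunit G.
Proof. by move=> H; rewrite -(g1mul x) -(gVmul h) -gmulA H gVmul. Qed.

Definition eqG (G : group) (x y : G) : bool :=
  if excluded_middle_informative (x = y) then true else false.

Lemma eqGP (G : group) (x y : G) : reflect (x = y) (eqG x y).
Proof. rewrite /eqG; case: excluded_middle_informative => h; by constructor. Qed.

Lemma In_filter (T : Type) (a : pred T) (s : seq T) x :
  List.In x (filter a s) <-> List.In x s /\ a x.
Proof.
elim: s => [|y s IH] /=; first by split=> [[]|[[]]].
case ay: (a y) => /=; rewrite IH; split.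
- by case=> [<-|[]]; auto.
- by case=> [[<-|H] ax]; auto.
- by case=> H; split; auto.
- by case=> [[E|H] ax]; [rewrite E ax in ay|]; auto.
Qed.

Lemma ForallE (T : Type) (P : T -> Prop) l : List.Forall P l -> forall x, List.In x l -> P x.
Proof. by move/List.Forall_forall. Qed.
Lemma ForallI (T : Type) (P : T -> Prop) l : (forall x, List.In x l -> P x) -> List.Forall P l.
Proof. by move/List.Forall_forall. Qed.

Section Prodset.
Variables (A B : Type) (V : nmodType) (f : A -> B -> V) (X : A -> Prop) (Y : B -> Prop).

Lemma prodset_ind (P : V -> Prop) : P 0 -> (forall u v, P u -> P v -> P (u + v)) ->
  (forall a b, X a -> Y b -> P (f a b)) -> forall z, prodset f X Y z -> P z.
Proof.
move=> P0 PD Pf z [l [Hl ->]]; elim: l Hl => [|p l IH] Hl; first by rewrite big_nil.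
move/List.Forall_cons_iff: Hl => [[Hx Hy] Hl]; rewrite big_cons; apply: PD; auto.
Qed.

Lemma prodset0 : prodset f X Y 0.
Proof. by exists [::]; rewrite big_nil. Qed.

Lemma prodsetD u v : prodset f X Y u -> prodset f X Y v -> prodset f X Y (u + v).
Proof.
move=> [l1 [H1 ->]] [l2 [H2 ->]]; exists (l1 ++ l2); split; last by rewrite big_cat.
by apply/List.Forall_app.
Qed.

Lemma prodset1 a b : X a -> Y b -> prodset f X Y (f a b).
Proof. by move=> Ha Hb; exists [:: (a, b)]; split; [constructor|rewrite big_seq1]. Qed.

End Prodset.

Lemma sum_closed (T : Type) (V : nmodType) (P : V -> Prop) (F : T -> V) (l : seq T) :
  P 0 -> (forall u v, P u -> P v -> P (u + v)) -> (forall x, List.In x l -> P (F x)) ->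
  P (\sum_(x <- l) F x).
Proof.
move=> P0 PD; elim: l => [|x l IH] H; first by rewrite big_nil.
rewrite big_cons; apply: PD; [apply: H; left|apply: IH => y Hy; apply: H; right]; done.
Qed.

Section IDS.
Variables (G : group) (V : zmodType) (X : G -> V -> Prop).
Hypothesis hX : forall g, add_subgroup (X g).

Lemma X0 g : X g 0. Proof. exact: (hX g).1. Qed.
Lemma XN g x : X g x -> X g (- x).
Proof. by move=> H; rewrite -sub0r; apply: (hX g).2 => //; apply: X0. Qed.
Lemma XB g x y : X g x -> X g y -> X g (x - y).
Proof. exact: (hX g).2. Qed.
Lemma XD g x y : X g x -> X g y -> X g (x + y).
Proof. by move=> Hx Hy; rewrite -[y]opprK; apply: XB => //; apply: XN. Qed.
Lemma Xsum (T : Type) g (F : T -> V) l : (forall x, List.In x l -> X g (F x)) ->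
  X g (\sum_(x <- l) F x).
Proof. by apply: sum_closed; [apply: X0|apply: XD]. Qed.

Lemma ids_merge n (l : seq (G * V)) : (size l <= n)%N -> List.Forall (fun p => X p.1 p.2) l ->
  exists l', List.NoDup (map fst l') /\ List.Forall (fun p => X p.1 p.2) l' /\
     \sum_(p <- l') p.2 = \sum_(p <- l) p.2 /\
     (forall k, List.In k (map fst l') -> List.In k (map fst l)).
Proof.
elim: n l => [|n IH] [|[k0 v0] t] //= Hs HF.
- by exists [::]; split; [constructor|split; [constructor|split; [rewrite big_nil|]]].
- by exists [::]; split; [constructor|split; [constructor|split; [rewrite big_nil|]]].
move/List.Forall_cons_iff: HF => [Hk0 HF].
pose P := fun p : G * V => eqG p.1 k0.
have HB : (size (filter (predC P) t) <= n)%N.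
  by rewrite size_filter (leq_trans (count_size _ _)).
have [lB [ND [FB [SB KB]]]] := IH _ HB (ForallI (fun x Hx =>
   ForallE HF (proj1 (In_filter _ _ _) Hx).1)).
exists ((k0, v0 + \sum_(p <- filter P t) p.2) :: lB); split; [|split; [|split]].
- constructor => // Hin; have := KB _ Hin; case/List.in_map_iff => p [E /In_filter [_]].
  by rewrite /= /P E; case: eqGP.
- constructor => //=; apply: XD => //; apply: Xsum => p /In_filter [Hp].
  rewrite /P; case: eqGP => // <- _; exact: (ForallE HF Hp).
- rewrite !big_cons SB -addrA; congr (_ + _).
  by rewrite [RHS](bigID P) /= !big_filter.
- move=> k /= [<-|Hk]; first by left.
  right; have := KB _ Hk; case/List.in_map_iff => p [E /In_filter [Hp _]].
  by apply/List.in_map_iff; exists p.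
Qed.

Lemma ids_unique (hI : internal_direct_sum X) k x (l : seq (G * V)) :
  X k x -> List.Forall (fun p => X p.1 p.2 /\ p.1 <> k) l ->
  x + \sum_(p <- l) p.2 = 0 -> x = 0.
Proof.
move=> Hx Hl Hs.
have [l' [ND [F' [S' K']]]] := ids_merge (leqnn (size l))
  (List.Forall_impl _ (fun p (H : X p.1 p.2 /\ p.1 <> k) => H.1) Hl).
have ND' : List.NoDup (map fst ((k, x) :: l')).
  constructor => // Hin; have := K' _ Hin; case/List.in_map_iff => p [E Hp].
  by have := (ForallE Hl Hp).2.
have := hI.2.2 ((k, x) :: l') ND' (@List.Forall_cons _ (fun p : G * V => X p.1 p.2) (k, x) _ Hx F').
rewrite big_cons S' => /(_ Hs).
by move/List.Forall_cons_iff => [].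
Qed.
End IDS.


Section CommonUnit.
Variables (S : pzRingType) (T P : S -> Prop).
Hypotheses (T0 : T 0) (TD : forall x y, T x -> T y -> T (x + y))
  (TN : forall x, T x -> T (- x)) (TM : forall x y, T x -> T y -> T (x * y)).

Lemma left_common : (forall s a, P s -> T a -> P (s - a * s)) ->
  (forall s, P s -> exists a, T a /\ a * s = s) ->
  forall l : seq S, (forall s, List.In s l -> P s) ->
  exists a, T a /\ forall s, List.In s l -> a * s = s.
Proof.
move=> Pc U; elim=> [|s l IH] Hl; first by exists 0.
have [a1 [T1 H1]] := IH (fun x Hx => Hl x (or_intror Hx)).
have [a2 [T2 H2]] := U _ (Pc s a1 (Hl s (or_introl erefl)) T1).
exists (a1 + a2 - a2 * a1); split; first by apply: TD; [apply: TD|apply: TN; apply: TM].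
move=> x [<-|Hx].
- rewrite mulrBl mulrDl -mulrA -addrA -mulrBr H2 addrC subrK //.
- by rewrite mulrBl mulrDl -mulrA H1 // addrK.
Qed.

Lemma right_common : (forall s a, P s -> T a -> P (s - s * a)) ->
  (forall s, P s -> exists a, T a /\ s * a = s) ->
  forall l : seq S, (forall s, List.In s l -> P s) ->
  exists a, T a /\ forall s, List.In s l -> s * a = s.
Proof.
move=> Pc U; elim=> [|s l IH] Hl; first by exists 0.
have [a1 [T1 H1]] := IH (fun x Hx => Hl x (or_intror Hx)).
have [a2 [T2 H2]] := U _ (Pc s a1 (Hl s (or_introl erefl)) T1).
exists (a1 + a2 - a1 * a2); split; first by apply: TD; [apply: TD|apply: TN; apply: TM].
move=> x [<-|Hx].
- rewrite mulrBr mulrDr mulrA -addrA -mulrBl H2 addrC subrK //.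
- by rewrite mulrBr mulrDr mulrA H1 // addrK.
Qed.
End CommonUnit.

Lemma sum_lunit (S : pzRingType) (a : S) (L : seq (S * S)) :
  (forall q, List.In q L -> a * q.1 = q.1) ->
  a * \sum_(q <- L) q.1 * q.2 = \sum_(q <- L) q.1 * q.2.
Proof.
elim: L => [|q L IH] H; first by rewrite !big_nil mulr0.
rewrite !big_cons mulrDr mulrA H; last by left.
by rewrite IH // => q' Hq; apply: H; right.
Qed.

Lemma sum_runit (S : pzRingType) (a : S) (L : seq (S * S)) :
  (forall q, List.In q L -> q.2 * a = q.2) ->
  (\sum_(q <- L) q.1 * q.2) * a = \sum_(q <- L) q.1 * q.2.
Proof.
elim: L => [|q L IH] H; first by rewrite !big_nil mul0r.
rewrite !big_cons mulrDl -mulrA H; last by left.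
by rewrite IH // => q' Hq; apply: H; right.
Qed.

Lemma prodset_assoc (S : pzRingType) (X Y Z : S -> Prop) z :
  prodset *%R (prodset *%R X Y) Z z -> prodset *%R X (prodset *%R Y Z) z.
Proof.
apply: prodset_ind; [exact: prodset0|exact: prodsetD|].
move=> a c Ha Hc; move: a Ha; apply: prodset_ind.
- by rewrite mul0r; apply: prodset0.
- by move=> u v Hu Hv; rewrite mulrDl; apply: prodsetD.
- by move=> x y Hx Hy; rewrite -mulrA; apply: prodset1 => //; apply: prodset1.
Qed.

Section Graded.
Variables (G : group) (S : pzRingType) (Sg : G -> S -> Prop).
Hypothesis gradedS : graded_ring Sg.

Let SgA g : add_subgroup (Sg g) := gradedS.1.1 g.
Let SgM g h x y : Sg g x -> Sg h y -> Sg (gmul g h) (x * y) := @gradedS.2 g h x y.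

Lemma one_e : Sg (gunit G) 1.
Proof.
have [l [Hl E1]] := gradedS.1.2.1 1.
pose P := fun p : G * S => eqG p.1 (gunit G).
set a := \sum_(p <- filter P l) p.2.
set b := \sum_(p <- filter (predC P) l) p.2.
have Ha : Sg (gunit G) a.
  apply: Xsum => // p /In_filter [Hp]; rewrite /P; case: eqGP => // <- _; exact: (ForallE Hl Hp).
have Eab : 1 = a + b by rewrite E1 /a /b [LHS](bigID P) /= !big_filter.
have Hb : forall h s, Sg h s -> s * b = 0.
  move=> h s Hs.
  have Hx : Sg h (s * a - s).
    apply: XB => //; rewrite -[h in Sg h _]gmul1; exact: SgM.
  have Hsum : (s * a - s) + \sum_(p <- map (fun p => (gmul h p.1, s * p.2)) (filter (predC P) l)) p.2 = 0.
    by rewrite big_map /= -!mulr_sumr -/a -/b addrAC -mulrDr -Eab mulr1 subrr.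
  have Hx0 := ids_unique SgA gradedS.1 Hx _ Hsum.
  have Hx0' : s * a - s = 0.
    apply: Hx0; apply: ForallI => q /List.in_map_iff [p [<- /In_filter [Hp HP]]] /=.
    split; first by apply: SgM => //; exact: (ForallE Hl Hp).
    by move/gcancel => E; move: HP; rewrite /= /P E; case: eqGP.
  by move: Hsum; rewrite Hx0' add0r big_map -mulr_sumr.
have b0 : b = 0.
  rewrite -[b]mul1r E1 mulr_suml; apply: (@sum_closed _ _ (fun x => x = 0)) => //.
  - by move=> u v -> ->; rewrite addr0.
  - move=> p Hp; exact: Hb _ _ (ForallE Hl Hp).
by rewrite Eab b0 addr0.
Qed.

Lemma WN u v z : prodset *%R (Sg u) (Sg v) z -> prodset *%R (Sg u) (Sg v) (- z).
Proof.
move: z; apply: (prodset_ind (P := fun z => prodset *%R (Sg u) (Sg v) (- z))).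
- by rewrite oppr0; apply: prodset0.
- by move=> a b Ha Hb; rewrite opprD; apply: prodsetD.
- by move=> a b Ha Hb; rewrite -mulNr; apply: prodset1 => //; apply: XN.
Qed.

Lemma WM u v z w : gmul (gmul v u) v = v -> prodset *%R (Sg u) (Sg v) z ->
  prodset *%R (Sg u) (Sg v) w -> prodset *%R (Sg u) (Sg v) (z * w).
Proof.
move=> E Hz Hw; move: z Hz.
apply: (prodset_ind (P := fun z => prodset *%R (Sg u) (Sg v) (z * w))).
- by rewrite mul0r; apply: prodset0.
- by move=> a b Ha Hb; rewrite mulrDl; apply: prodsetD.
move=> x y Hx Hy; move: w Hw.
apply: (prodset_ind (P := fun w => prodset *%R (Sg u) (Sg v) (x * y * w))).
- by rewrite mulr0; apply: prodset0.
- by move=> a b Ha Hb; rewrite mulrDr; apply: prodsetD.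
- move=> x' y' Hx' Hy'; rewrite -mulrA; apply: prodset1 => //.
  by rewrite mulrA -E; apply: SgM => //; apply: SgM.
Qed.

Lemma WactL u v w z s : gmul u (gmul v w) = w -> prodset *%R (Sg u) (Sg v) z ->
  Sg w s -> Sg w (z * s).
Proof.
move=> E Hz Hs; move: z Hz.
apply: (prodset_ind (P := fun z => Sg w (z * s))).
- by rewrite mul0r; apply: X0.
- by move=> a b Ha Hb; rewrite mulrDl; apply: XD.
- by move=> x y Hx Hy; rewrite -mulrA -E; apply: SgM => //; apply: SgM.
Qed.

Lemma WactR u v w z s : gmul (gmul w u) v = w -> prodset *%R (Sg u) (Sg v) z ->
  Sg w s -> Sg w (s * z).
Proof.
move=> E Hz Hs; move: z Hz.
apply: (prodset_ind (P := fun z => Sg w (s * z))).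
- by rewrite mulr0; apply: X0.
- by move=> a b Ha Hb; rewrite mulrDr; apply: XD.
- by move=> x y Hx Hy; rewrite mulrA -E; apply: SgM => //; apply: SgM.
Qed.

Lemma gE1 (g : G) : gmul (gmul (ginv g) g) (ginv g) = ginv g.
Proof. by rewrite gVmul g1mul. Qed.
Lemma gE2 (g : G) : gmul (gmul g (ginv g)) g = g.
Proof. by rewrite gmulV g1mul. Qed.
Lemma gE3 (g : G) : gmul g (gmul (ginv g) g) = g.
Proof. by rewrite gVmul gmul1. Qed.
Lemma gE4 (g : G) : gmul (gmul (ginv g) g) (ginv g) = ginv g.
Proof. by rewrite gVmul g1mul. Qed.

Lemma i_sunital : nearly_eps_strongly Sg -> forall g, s_unital_ring (Sgg Sg g).
Proof.
move=> Hi g x [L [HL ->]]; split.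
- have [a [Ta Ha]] := left_common (T := Sgg Sg g) (P := Sg g) (@prodset0 _ _ _ _ _ _)
    (@prodsetD _ _ _ _ _ _) (@WN _ _) (fun z w => @WM _ _ z w (gE1 g))
    (fun s a Hs Ha => XB SgA Hs (WactL (gE3 g) Ha Hs)) (fun s Hs => (Hi g s Hs).1) (l := map fst L)
    (fun s Hs => match proj1 (List.in_map_iff _ _ _) Hs with ex_intro q (conj E Hq) =>
        eq_ind _ (Sg g) (ForallE HL Hq).1 _ E end).
  exists a; split => //; apply: sum_lunit => q Hq; apply: Ha; apply/List.in_map_iff; by exists q.
- have U : forall s, Sg (ginv g) s -> exists a, Sgg Sg g a /\ s * a = s.
    by move=> s Hs; have := (Hi _ s Hs).2; rewrite ginvK.
  have [a [Ta Ha]] := right_common (T := Sgg Sg g) (P := Sg (ginv g)) (@prodset0 _ _ _ _ _ _)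
    (@prodsetD _ _ _ _ _ _) (@WN _ _) (fun z w => @WM _ _ z w (gE1 g))
    (fun s a Hs Ha => XB SgA Hs (WactR (gE4 g) Ha Hs)) U (l := map snd L)
    (fun s Hs => match proj1 (List.in_map_iff _ _ _) Hs with ex_intro q (conj E Hq) =>
        eq_ind _ (Sg (ginv g)) (ForallE HL Hq).2 _ E end).
  exists a; split => //; apply: sum_runit => q Hq; apply: Ha; apply/List.in_map_iff; by exists q.
Qed.

Lemma to_i : (forall g, s_unital_ring (Sgg Sg g)) ->
  (forall g s, Sg g s -> prodset *%R (Sgg Sg g) (Sg g) s) -> nearly_eps_strongly Sg.
Proof.
move=> sU H g s Hs; split.
- have [L [HL Es]] := H g s Hs.
  have [a [Ta Ha]] := left_common (T := Sgg Sg g) (P := Sgg Sg g) (@prodset0 _ _ _ _ _ _)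
    (@prodsetD _ _ _ _ _ _) (@WN _ _) (fun z w => @WM _ _ z w (gE1 g))
    (fun s a Hs Ha => prodsetD Hs (WN (WM (gE1 g) Ha Hs))) (fun s Hs => (sU g s Hs).1) (l := map fst L)
    (fun s Hs => match proj1 (List.in_map_iff _ _ _) Hs with ex_intro q (conj E Hq) =>
        eq_ind _ (Sgg Sg g) (ForallE HL Hq).1 _ E end).
  exists a; split => //; rewrite Es; apply: sum_lunit => q Hq; apply: Ha; apply/List.in_map_iff; by exists q.
- have [L [HL Es]] := prodset_assoc (H g s Hs).
  have U : forall s, prodset *%R (Sg (ginv g)) (Sg g) s ->
       exists a, prodset *%R (Sg (ginv g)) (Sg g) a /\ s * a = s.
    by move=> x Hx; have := (sU (ginv g) x); rewrite /Sgg ginvK => /(_ Hx) [].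
  have [a [Ta Ha]] := right_common (T := prodset *%R (Sg (ginv g)) (Sg g))
    (P := prodset *%R (Sg (ginv g)) (Sg g)) (@prodset0 _ _ _ _ _ _)
    (@prodsetD _ _ _ _ _ _) (@WN _ _) (fun z w => @WM _ _ z w (gE2 g))
    (fun s a Hs Ha => prodsetD Hs (WN (WM (gE2 g) Hs Ha))) U (l := map snd L)
    (fun s Hs => match proj1 (List.in_map_iff _ _ _) Hs with ex_intro q (conj E Hq) =>
        eq_ind _ (prodset *%R (Sg (ginv g)) (Sg g)) (ForallE HL Hq).2 _ E end).
  exists a; split => //; rewrite Es; apply: sum_runit => q Hq; apply: Ha; apply/List.in_map_iff; by exists q.
Qed.

Lemma grS : graded_module (M := S^o) Sg Sg.
Proof. split; [exact: gradedS.1|exact: gradedS.2]. Qed.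

End Graded.


Section Tensor.
Variables (S : pzRingType) (M : lmodType S).

Definition cnt (l : seq (S * M)) (p : S * M) : int := fcoef (map (fun q => (1%:Z, q)) l) p.

Lemma fcoef_cons (q : int * (S * M)) c p :
  fcoef (q :: c) p = (if q.2 == p then q.1 else 0) + fcoef c p.
Proof. by rewrite /fcoef big_cons; case: ifP => _; rewrite ?add0r. Qed.
Lemma fcoef_nil p : fcoef (S := S) (M := M) [::] p = 0.
Proof. by rewrite /fcoef big_nil. Qed.
Lemma cnt_cons q l p : cnt (q :: l) p = (if q == p then 1 else 0) + cnt l p.
Proof. by rewrite /cnt /= fcoef_cons. Qed.
Lemma cnt_nil p : cnt [::] p = 0.
Proof. exact: fcoef_nil. Qed.
Lemma cnt_cat l1 l2 p : cnt (l1 ++ l2) p = cnt l1 p + cnt l2 p.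
Proof. by rewrite /cnt /fcoef map_cat big_cat. Qed.
Lemma cnt_flatten (A : Type) (F : A -> seq (S * M)) L p :
  cnt (flatten (map F L)) p = \sum_(a <- L) cnt (F a) p.
Proof. by elim: L => [|a L IH]; rewrite ?big_nil ?cnt_nil //= cnt_cat IH big_cons. Qed.
Lemma cnt_map (B : Type) (h : B -> S * M) L p :
  cnt (map h L) p = \sum_(b <- L) (if h b == p then 1 else 0).
Proof. by elim: L => [|a L IH]; rewrite ?big_nil ?cnt_nil //= cnt_cons IH big_cons. Qed.

Variables (X : S -> Prop) (Y : M -> Prop) (R : S -> Prop).

Definition Zf (f : S * M -> int) : Prop :=
  exists rels : seq (int * seq (int * (S * M))),
    List.Forall (fun r => tensor_relation X Y R r.2) rels /\
    forall p, f p = \sum_(r <- rels) r.1 * fcoef r.2 p.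

Lemma Zf_ext f g : (forall p, f p = g p) -> Zf f -> Zf g.
Proof. by move=> E [rels [H1 H2]]; exists rels; split => // p; rewrite -E. Qed.
Lemma Zf0 : Zf (fun _ => 0).
Proof. by exists [::]; split => // p; rewrite big_nil. Qed.
Lemma ZfD f g : Zf f -> Zf g -> Zf (fun p => f p + g p).
Proof.
move=> [r1 [H1 E1]] [r2 [H2 E2]]; exists (r1 ++ r2); split.
  by apply/List.Forall_app.
by move=> p; rewrite big_cat E1 E2.
Qed.
Lemma ZfN f : Zf f -> Zf (fun p => - f p).
Proof.
move=> [r1 [H1 E1]]; exists (map (fun r => (- r.1, r.2)) r1); split.
  by apply: ForallI => r /List.in_map_iff [r' [<- Hr]]; exact: (ForallE H1 Hr).
by move=> p; rewrite big_map E1 -sumrN; apply: eq_bigr => r _ /=; rewrite mulNr.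
Qed.
Lemma Zf_rel c : tensor_relation X Y R c -> Zf (fcoef c).
Proof.
by move=> H; exists [:: (1, c)]; split; [constructor|move=> p; rewrite big_seq1 mul1r].
Qed.

Definition teq (l1 l2 : seq (S * M)) := Zf (fun p => cnt l1 p - cnt l2 p).

Lemma tz_teq l : teq l [::] -> tensor_zero X Y R l.
Proof. by move=> [rels [H E]]; exists rels; split => // p; rewrite -E cnt_nil subr0. Qed.

Lemma teq_cnt l1 l2 : (forall p, cnt l1 p = cnt l2 p) -> teq l1 l2.
Proof. by move=> E; apply: Zf_ext Zf0 => p; rewrite E subrr. Qed.
Lemma teq_refl l : teq l l. Proof. exact: teq_cnt. Qed.
Lemma teq_sym l1 l2 : teq l1 l2 -> teq l2 l1.
Proof. by move/ZfN; apply: Zf_ext => p; rewrite opprB. Qed.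
Lemma teq_trans l1 l2 l3 : teq l1 l2 -> teq l2 l3 -> teq l1 l3.
Proof. by move=> H1 H2; apply: Zf_ext (ZfD H1 H2) => p; rewrite addrA subrK. Qed.
Lemma teq_cat l1 l2 l3 l4 : teq l1 l2 -> teq l3 l4 -> teq (l1 ++ l3) (l2 ++ l4).
Proof.
move=> H1 H2; apply: Zf_ext (ZfD H1 H2) => p; rewrite !cnt_cat.
by rewrite opprD addrACA.
Qed.
Lemma teq_flatten (A : Type) (F F' : A -> seq (S * M)) L :
  (forall a, List.In a L -> teq (F a) (F' a)) ->
  teq (flatten (map F L)) (flatten (map F' L)).
Proof.
elim: L => [|a L IH] H /=; first exact: teq_refl.
apply: teq_cat; [apply: H; left|apply: IH => b Hb; apply: H; right]; done.
Qed.

Lemma if3 (a b c : bool) :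
  ((if a then 1 else 0) + 0) - ((if b then 1 else 0) + ((if c then 1 else 0) + 0))
  = (if a then 1 else 0) + ((if b then -1 else 0) + ((if c then -1 else 0) + 0)) :> int.
Proof. by case: a; case: b; case: c. Qed.
Lemma if2 (a b : bool) :
  ((if a then 1 else 0) + 0) - ((if b then 1 else 0) + 0)
  = (if a then 1 else 0) + ((if b then -1 else 0) + 0) :> int.
Proof. by case: a; case: b. Qed.

Lemma teq_add s s' m : X s -> X s' -> Y m -> teq [:: (s + s', m)] [:: (s, m); (s', m)].
Proof.
move=> Hs Hs' Hm; apply: Zf_ext (Zf_rel (c := [:: (1%:Z, (s + s', m)); ((-1)%:~R, (s, m)); ((-1)%:~R, (s', m))]) _).
  by move=> p; rewrite !fcoef_cons fcoef_nil !cnt_cons !cnt_nil /= !intz if3.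
by left; exists s, s', m.
Qed.
Lemma teq_addr s m m' : X s -> Y m -> Y m' -> teq [:: (s, m + m')] [:: (s, m); (s, m')].
Proof.
move=> Hs Hm Hm'; apply: Zf_ext (Zf_rel (c := [:: (1%:Z, (s, m + m')); ((-1)%:~R, (s, m)); ((-1)%:~R, (s, m'))]) _).
  by move=> p; rewrite !fcoef_cons fcoef_nil !cnt_cons !cnt_nil /= !intz if3.
by right; left; exists s, m, m'.
Qed.
Lemma teq_bal s r m : X s -> R r -> Y m -> teq [:: (s * r, m)] [:: (s, r *: m)].
Proof.
move=> Hs Hr Hm; apply: Zf_ext (Zf_rel (c := [:: (1%:Z, (s * r, m)); ((-1)%:~R, (s, r *: m))]) _).
  by move=> p; rewrite !fcoef_cons fcoef_nil !cnt_cons !cnt_nil /= !intz if2.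
by right; right; exists s, r, m.
Qed.

Lemma teq_zero_l m : X 0 -> Y m -> teq [:: (0, m)] [::].
Proof.
move=> H0 Hm; have := ZfN (teq_add H0 H0 Hm); rewrite addr0.
apply: Zf_ext => p; rewrite !cnt_cons !cnt_nil; case: (_ == p) => //.
Qed.
Lemma teq_zero_r s : X s -> Y 0 -> teq [:: (s, 0)] [::].
Proof.
move=> Hs H0; have := ZfN (teq_addr Hs H0 H0); rewrite addr0.
apply: Zf_ext => p; rewrite !cnt_cons !cnt_nil; case: (_ == p) => //.
Qed.

Lemma teq_suml (T : Type) (F : T -> S) L m : X 0 -> (forall x y, X x -> X y -> X (x + y)) ->
  Y m -> (forall x, List.In x L -> X (F x)) ->
  teq [:: (\sum_(x <- L) F x, m)] (map (fun x => (F x, m)) L).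
Proof.
move=> H0 HD Hm; elim: L => [|x L IH] HL; first by rewrite big_nil; apply: teq_zero_l.
have HL' : forall y, List.In y L -> X (F y) by move=> y Hy; apply: HL; right.
rewrite big_cons; apply: teq_trans (teq_add _ _ Hm) _.
- by apply: HL; left.
- by apply: sum_closed.
- exact: (teq_cat (teq_refl [:: (F x, m)]) (IH HL')).
Qed.
Lemma teq_sumr (T : Type) (F : T -> M) L s : Y 0 -> (forall x y, Y x -> Y y -> Y (x + y)) ->
  X s -> (forall x, List.In x L -> Y (F x)) ->
  teq [:: (s, \sum_(x <- L) F x)] (map (fun x => (s, F x)) L).
Proof.
move=> H0 HD Hs; elim: L => [|x L IH] HL; first by rewrite big_nil; apply: teq_zero_r.
have HL' : forall y, List.In y L -> Y (F y) by move=> y Hy; apply: HL; right.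
rewrite big_cons; apply: teq_trans (teq_addr _ _ _) _ => //.
- by apply: HL; left.
- by apply: sum_closed.
- exact: (teq_cat (teq_refl [:: (s, F x)]) (IH HL')).
Qed.
End Tensor.

Lemma Zf_mono (S : pzRingType) (M : lmodType S) (X X' : S -> Prop) (Y : M -> Prop) R f :
  (forall s, X s -> X' s) -> Zf X Y R f -> Zf X' Y R f.
Proof.
move=> HX [rels [H E]]; exists rels; split => //.
apply: ForallI => r Hr; have := ForallE H Hr.
case=> [[s [s' [m [h1 [h2 [h3 ->]]]]]]|[[s [m [m' [h1 [h2 [h3 ->]]]]]]|[s [r' [m [h1 [h2 [h3 ->]]]]]]]].
- by left; exists s, s', m; auto.
- by right; left; exists s, m, m'; auto.
- by right; right; exists s, r', m; auto.
Qed.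

Lemma cnt_swap (S : pzRingType) (M : lmodType S) (A B : Type) (f : A -> B -> S * M) LA LB p :
  cnt (flatten (map (fun a => map (f a) LB) LA)) p = cnt (flatten (map (fun b => map (f^~ b) LA) LB)) p.
Proof.
rewrite !cnt_flatten; under eq_bigr do rewrite cnt_map.
under [RHS]eq_bigr do rewrite cnt_map.
exact: exchange_big.
Qed.


Lemma map_flatten1 (A B : Type) (f : A -> B) l : map f l = flatten (map (fun x => [:: f x]) l).
Proof. by elim: l => //= x l ->. Qed.
Lemma flatten_nil (A B : Type) (l : seq A) : flatten (map (fun _ => [::] : seq B) l) = [::].
Proof. by elim: l. Qed.

Lemma teq_map (S : pzRingType) (M : lmodType S) X Y R (A : Type) (f f' : A -> S * M) L :
  (forall x, List.In x L -> teq X Y R [:: f x] [:: f' x]) ->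
  teq X Y R (map f L) (map f' L).
Proof. by move=> H; rewrite (map_flatten1 f) (map_flatten1 f'); apply: teq_flatten. Qed.

Lemma cnt_perm (S : pzRingType) (M : lmodType S) (l1 l2 : seq (S * M)) p :
  perm_eq l1 l2 -> cnt l1 p = cnt l2 p.
Proof. by move=> H; rewrite -(map_id l1) -(map_id l2) !cnt_map; apply: perm_big. Qed.

Section Main.
Variables (G : group) (S : pzRingType) (Sg : G -> S -> Prop).
Hypothesis gradedS : graded_ring Sg.

Let SgA g : add_subgroup (Sg g) := gradedS.1.1 g.
Let SgM g h x y : Sg g x -> Sg h y -> Sg (gmul g h) (x * y) := @gradedS.2 g h x y.

Lemma common_left (Hi : nearly_eps_strongly Sg) g (l : seq S) :
  (forall s, List.In s l -> Sg g s) -> exists a, Sgg Sg g a /\ forall s, List.In s l -> a * s = s.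
Proof.
move=> Hl.
exact: (left_common (T := Sgg Sg g) (P := Sg g) (@prodset0 _ _ _ _ _ _)
    (@prodsetD _ _ _ _ _ _) (@WN _ _ _ gradedS _ _) (fun z w => @WM _ _ _ gradedS _ _ z w (gE1 g))
    (fun s a Hs Ha => XB SgA Hs (WactL gradedS (gE3 g) Ha Hs)) (fun s Hs => (Hi g s Hs).1) Hl).
Qed.

Section Mod.
Variables (M : lmodType S) (Mg : G -> M -> Prop).
Hypothesis grM : graded_module Sg Mg.
Let MgA g : add_subgroup (Mg g) := grM.1.1 g.
Let MgM g h x m : Sg g x -> Mg h m -> Mg (gmul g h) (x *: m) := @grM.2 g h x m.

Lemma core_inj (Hi : nearly_eps_strongly Sg) g h (l : seq (S * M)) :
  List.Forall (fun p => Sg g p.1 /\ Mg h p.2) l -> \sum_(p <- l) p.1 *: p.2 = 0 ->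
  tensor_zero (Sg g) (Mg h) (Sg (gunit G)) l.
Proof.
move=> Hl Hsum.
have [a [[L [HL Ea]] Ha]] := common_left Hi (l := map fst l) (fun s Hs =>
  match proj1 (List.in_map_iff _ _ _) Hs with ex_intro q (conj E Hq) =>
        eq_ind _ (Sg g) (ForallE Hl Hq).1 _ E end).
have Ha' : forall p, List.In p l -> a * p.1 = p.1.
  by move=> p Hp; apply: Ha; apply/List.in_map_iff; exists p.
have E1 : l = map (fun p => (a * p.1, p.2)) l.
  elim: l Ha' {Hl Hsum Ha} => //= p l IH H; congr cons.
    by rewrite H; [rewrite -surjective_pairing|left].
  by apply: IH => q Hq; apply: H; right.
apply: tz_teq.
pose F1 := fun p : S * M => map (fun q : S * S => (q.1, (q.2 * p.1) *: p.2)) L.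
pose F2 := fun q : S * S => map (fun p : S * M => (q.1, (q.2 * p.1) *: p.2)) l.
have Hpq : forall p q, List.In p l -> List.In q L ->
   [/\ Sg g (q.1 * (q.2 * p.1)), Sg (gunit G) (q.2 * p.1), Sg g q.1, Mg h p.2 & Mg h ((q.2 * p.1) *: p.2)].
  move=> p q Hp Hq; have [Hp1 Hp2] := ForallE Hl Hp; have [Hq1 Hq2] := ForallE HL Hq.
  split => //.
  - by have := SgM Hq1 (SgM Hq2 Hp1); rewrite gE3.
  - by have := SgM Hq2 Hp1; rewrite gVmul.
  - by have := MgM (SgM Hq2 Hp1) Hp2; rewrite gVmul g1mul.
apply: (@teq_trans _ _ _ _ _ _ (flatten (map F1 l))).
  rewrite {1}E1 map_flatten1; apply: teq_flatten => p Hp.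
  rewrite Ea mulr_suml.
  rewrite (eq_bigr (fun q : S * S => q.1 * (q.2 * p.1))); last by move=> q _; rewrite mulrA.
  apply: teq_trans (teq_suml (F := fun q : S * S => q.1 * (q.2 * p.1)) _ _ _ _ _) _.
  - exact: X0.
  - exact: XD.
  - by have [] := ForallE Hl Hp.
  - by move=> q Hq; have [] := Hpq p q Hp Hq.
  apply: teq_map => q Hq; have [? ? ? ? ?] := Hpq p q Hp Hq.
  by apply: teq_bal.
apply: (@teq_trans _ _ _ _ _ _ (flatten (map F2 L))).
  by apply: teq_cnt => p; rewrite /F1 /F2 (cnt_swap (fun (p : S * M) (q : S * S) => (q.1, (q.2 * p.1) *: p.2))).
rewrite -(flatten_nil _ L); apply: teq_flatten => q Hq.
rewrite /F2; apply: teq_trans (teq_sym (teq_sumr (s := q.1) (L := l) (F := fun p : S * M => (q.2 * p.1) *: p.2) _ _ _ _ _)) _.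
- exact: X0.
- exact: XD.
- by have [] := ForallE HL Hq.
- by move=> p Hp; have [] := Hpq p q Hp Hq.
under eq_bigr do rewrite -scalerA.
rewrite -scaler_sumr Hsum scaler0; apply: teq_zero_r; [by have [] := ForallE HL Hq|exact: X0].
Qed.


Lemma mm1 (Hi : nearly_eps_strongly Sg) g h s m : Sg g s -> Mg h m ->
  prodset *:%R (Sgg Sg g) (Mg (gmul g h)) (s *: m).
Proof.
move=> Hs Hm; have [a [Ha Eas]] := (Hi g s Hs).1.
rewrite -{1}Eas -scalerA; apply: prodset1 => //; exact: MgM.
Qed.

Lemma mm2 g h z : prodset *:%R (Sgg Sg g) (Mg (gmul g h)) z -> prodset *:%R (Sg g) (Mg h) z.
Proof.
move: z; apply: (prodset_ind (P := prodset *:%R (Sg g) (Mg h))); [exact: prodset0|exact: prodsetD|].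
move=> a m Ha Hm; move: a Ha.
apply: (prodset_ind (P := fun a => prodset *:%R (Sg g) (Mg h) (a *: m))).
- by rewrite scale0r; apply: prodset0.
- by move=> u v Hu Hv; rewrite scalerDl; apply: prodsetD.
- move=> x y Hx Hy; rewrite -scalerA; apply: prodset1 => //.
  by have := MgM Hy Hm; rewrite gmulA gVmul g1mul.
Qed.


Lemma group_zero (Hi : nearly_eps_strongly Sg) n (l3 : seq (G * (S * M))) : (size l3 <= n)%N ->
  List.Forall (fun q => Sg q.1 q.2.1 /\ Mg (gunit G) q.2.2) l3 ->
  \sum_(q <- l3) q.2.1 *: q.2.2 = 0 ->
  teq (fun _ => True) (Mg (gunit G)) (Sg (gunit G)) (map snd l3) [::].
Proof.
elim: n l3 => [|n IH] [|[k0 [x0 m0]] t] //= Hs HF Hsum; try exact: teq_refl.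
move/List.Forall_cons_iff: HF => [[Hx0 Hm0] HF].
pose P := fun q : G * (S * M) => eqG q.1 k0.
have HA : forall q, List.In q (filter P t) -> Sg k0 q.2.1 /\ Mg (gunit G) q.2.2.
  move=> q /In_filter [Hq]; rewrite /P; case: eqGP => // <- _; exact: (ForallE HF Hq).
set yA := x0 *: m0 + \sum_(q <- filter P t) q.2.1 *: q.2.2.
have HyA : Mg k0 yA.
  apply: XD => //; first by have := MgM Hx0 Hm0; rewrite gmul1.
  apply: Xsum => // q Hq; have [h1 h2] := HA q Hq; have := MgM h1 h2; rewrite gmul1.
  done.
have Hsplit : yA + \sum_(q <- filter (predC P) t) q.2.1 *: q.2.2 = 0.
  by move: Hsum; rewrite big_cons (bigID P) /= !big_filter /yA addrA big_filter.
have yA0 : yA = 0.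
  apply: (ids_unique MgA grM.1 HyA (l := map (fun q => (q.1, q.2.1 *: q.2.2)) (filter (predC P) t))).
  - apply: ForallI => q /List.in_map_iff [q' [<- /In_filter [Hq' HP]]] /=; split.
    + by have [h1 h2] := ForallE HF Hq'; have := MgM h1 h2; rewrite gmul1.
    + by move=> E; move: HP; rewrite /= /P E; case: eqGP.
  - by rewrite big_map.
have TZ : Zf (Sg k0) (Mg (gunit G)) (Sg (gunit G)) (cnt ((x0, m0) :: map snd (filter P t))).
  apply: (core_inj Hi).
  - constructor => //; apply: ForallI => p /List.in_map_iff [q [<- Hq]]; exact: HA.
  - by rewrite big_cons big_map.
have TA : teq (fun _ => True) (Mg (gunit G)) (Sg (gunit G)) ((x0, m0) :: map snd (filter P t)) [::].
  by apply: Zf_ext (Zf_mono _ TZ) => [p|//]; rewrite cnt_nil subr0.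
have TB : teq (fun _ => True) (Mg (gunit G)) (Sg (gunit G)) (map snd (filter (predC P) t)) [::].
  apply: IH.
  - by rewrite size_filter (leq_trans (count_size _ _)).
  - by apply: ForallI => q /In_filter [Hq _]; exact: (ForallE HF Hq).
  - by move: Hsplit; rewrite yA0 add0r.
apply: teq_trans (teq_cat TA TB); apply: teq_cnt => p.
rewrite cnt_cat /= !cnt_cons !cnt_map -addrA; congr (_ + _).
by rewrite [LHS](bigID P) /= !big_filter.
Qed.

End Mod.

Lemma i_iii : nearly_eps_strongly Sg -> cond_iii Sg.
Proof.
move=> Hi; split; first exact: i_sunital gradedS Hi.
move=> M Mg grM g h; split; [|split].
- by move=> s m; apply: mm1.
- by move=> z Hz; apply: mm2 Hz.
- by move=> l; apply: core_inj.
Qed.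

Lemma iii_ii : cond_iii Sg -> cond_ii Sg.
Proof.
move=> [sU H]; split => // M Mg grM g h z; have [c1 [c2 _]] := H M Mg grM g h; split.
- move: z; apply: (prodset_ind (P := prodset *:%R (Sgg Sg g) (Mg (gmul g h)))).
  + exact: prodset0.
  + exact: prodsetD.
  + exact: c1.
- exact: c2.
Qed.

Lemma ii_i : cond_ii Sg -> nearly_eps_strongly Sg.
Proof.
move=> [sU H]; apply: (to_i gradedS) => // g s Hs.
have H1 : prodset (V := S^o) *:%R (Sg g) (Sg (gunit G)) s.
  have := @prodset1 S S^o S^o *:%R (Sg g) (Sg (gunit G)) s 1 Hs (one_e gradedS).
  by rewrite [_ *: _](mulr1 s).
have := (H _ _ (grS gradedS) g (gunit G) s).1 H1.
by rewrite gmul1.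
Qed.

Lemma iv_i : cond_iv Sg -> nearly_eps_strongly Sg.
Proof.
move=> [sU [H _]]; apply: (to_i gradedS) => // g s Hs.
have := (H _ _ (grS gradedS)).1 g s 1 Hs (one_e gradedS).
by rewrite [_ *: _](mulr1 s).
Qed.

Lemma i_iv : nearly_eps_strongly Sg -> cond_iv Sg.
Proof.
move=> Hi; split; first exact: i_sunital gradedS Hi.
split; last first.
  move=> M N Mg Ng grM grN f Hf l Hl.
  rewrite linear_sum; apply: eq_bigr => p _; exact: linearZ.
move=> M Mg grM; split; [|split].
- move=> g s m Hs Hm; have := mm1 grM Hi Hs Hm; by rewrite gmul1.
- move=> z [L [HL ->]].
  have : prodset *:%R (fun _ : S => True) (Mg (gunit G)) (\sum_(p <- L) p.2).
    apply: sum_closed; [exact: prodset0|exact: prodsetD|].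
    move=> p Hp; have := ForallE HL Hp.
    have -> : Mg p.1 = Mg (gmul p.1 (gunit G)) by rewrite gmul1.
    move/(mm2 grM).
    apply: (prodset_ind (P := prodset *:%R (fun _ : S => True) (Mg (gunit G)))).
    + exact: prodset0.
    + exact: prodsetD.
    + by move=> a b _ Hb; apply: prodset1.
  move=> [l [Hl E]]; exists l; split => //.
  by apply: ForallI => p Hp; have [] := ForallE Hl Hp.
- move=> l Hl Hsum.
  have [l3 [H3 [E3 S3]]] : exists l3 : seq (G * (S * M)),
     List.Forall (fun q => Sg q.1 q.2.1 /\ Mg (gunit G) q.2.2) l3 /\
     teq (fun _ => True) (Mg (gunit G)) (Sg (gunit G)) l (map snd l3) /\
     \sum_(q <- l3) q.2.1 *: q.2.2 = \sum_(p <- l) p.1 *: p.2.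
    elim: l Hl {Hsum} => [|p l IH] Hl.
      by exists [::]; split; [exact: List.Forall_nil|split; [apply: teq_refl|rewrite !big_nil]].
    move/List.Forall_cons_iff: Hl => [Hp Hl]; have [l3 [H3 [E3 S3]]] := IH Hl.
    have [D [HD ED]] := gradedS.1.2.1 p.1.
    exists (map (fun q => (q.1, (q.2, p.2))) D ++ l3); split; [|split].
    + apply/List.Forall_app; split => //; apply: ForallI => q /List.in_map_iff [d [<- Hd]] /=.
      by split => //; exact: (ForallE HD Hd).
    + rewrite map_cat -map_comp.
      have H1 : teq (fun _ => True) (Mg (gunit G)) (Sg (gunit G)) [:: p] (map (fun q => (q.2, p.2)) D).
        have -> : p = (\sum_(q <- D) q.2, p.2) by rewrite -ED -surjective_pairing.
        by apply: (teq_suml (F := fun q : G * S => q.2) _ _ _ _ _).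
      exact: (teq_cat H1 E3).
    + rewrite big_cat big_map big_cons S3 /= -scaler_suml -ED //.
  exact: tz_teq (teq_trans E3 (group_zero grM Hi (leqnn _) H3 (etrans S3 Hsum))).
Qed.
End Main.

Unset Implicit Arguments.
Close Scope ring_scope.

Theorem mainTheorem2 (G : group) (S : pzRingType) (Sg : G -> S -> Prop)
  (gradedS : graded_ring Sg) :
  [<-> nearly_eps_strongly Sg; cond_ii Sg; cond_iii Sg; cond_iv Sg].
Proof.
tfae.
- by move=> H; apply: iii_ii; apply: (i_iii gradedS).
- by move=> H; apply: (i_iii gradedS); apply: (ii_i gradedS).
- by move=> H; apply: (i_iv gradedS); apply: (ii_i gradedS); apply: iii_ii.
- exact: (iv_i gradedS).
Qed.
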